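(* Let $\mathcal{H}$ be a separable Hilbert space, $\{\mathcal{H}_j\}_{j\in J}$ ($J\subseteq\mathbb{Z}$) a sequence of closed subspaces of $\mathcal{H}$, $K\in\mathcal{B}(\mathcal{H})$, and $\Lambda_j\in\mathcal{B}(\mathcal{H},\mathcal{H}_j)$ for each $j\in J$. For each $j\in J$ let $\{\mathcal{H}_{ij}\}_{i\in I_j}$ be a sequence of closed subspaces of $\mathcal{H}_j$, and let $\{\Gamma_{ij}\in\mathcal{B}(\mathcal{H}_j,\mathcal{H}_{ij})\}_{i\in I_j}$ be a $g$-frame for $\mathcal{H}_j$ with bounds $C_j,D_j$, such that $0<C=\inf_{j\in J}C_j\leq\sup_{j\in J}D_j=D<\infty$. Then the following are equivalent: (i) $\{\Lambda_j\}_{j\in J}$ is a $K$-$g$-frame for $\mathcal{H}$; (ii) $\{\Gamma_{ij}\Lambda_j\in\mathcal{B}(\mathcal{H},\mathcal{H}_{ij}): i\in I_j, j\in J\}$ is a $K$-$g$-frame for $\mathcal{H}$.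
   Context: A family $\{\Lambda_j\in\mathcal{B}(\mathcal{H},\mathcal{V}_j)\}_{j}$ is a $K$-$g$-frame for $\mathcal{H}$ (with respect to the spaces $\mathcal{V}_j$) if there exist $0<A\leq B<\infty$ with $A\|K^{\ast}f\|^2\leq\sum_{j}\|\Lambda_jf\|^2\leq B\|f\|^2$ for all $f\in\mathcal{H}$. A family $\{\Gamma_i\in\mathcal{B}(\mathcal{W},\mathcal{W}_i)\}_i$ is a $g$-frame for a Hilbert space $\mathcal{W}$ with bounds $C,D$ ($0<C\leq D<\infty$) if $C\|g\|^2\leq\sum_i\|\Gamma_ig\|^2\leq D\|g\|^2$ for all $g\in\mathcal{W}$. *)

(* Defs.v *)
From HB Require Import structures.
From mathcomp Require Import all_boot all_order all_algebra.
From mathcomp Require Import all_classical all_reals.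
From mathcomp Require Import ereal esum.
From mathcomp Require Import complex.

Set Implicit Arguments.
Unset Strict Implicit.
Unset Printing Implicit Defensive.

Import Order.TTheory GRing.Theory Num.Theory.
Local Open Scope classical_set_scope.
Local Open Scope ring_scope.

(* Convention: ip is linear in the first argument, conjugate-linear    *)
(* in the second.                                                      *)
Section Hilbert.
Variables (R : realType) (V : lmodType R[i]) (ip : V -> V -> R[i]).

Definition is_inner_product : Prop :=
  [/\ (forall (a : R[i]) (x y z : V), ip (a *: x + y) z = a * ip x z + ip y z),
      (forall x y : V, ip x y = (ip y x)^*),
      (forall x : V, 0 <= ip x x) &
      (forall x : V, ip x x = 0 -> x = 0)].

Definition hnorm (x : V) : R := Num.sqrt (complex.Re (ip x x)).

Definition hconverges (u : nat -> V) (x : V) : Prop :=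
  forall e : R, 0 < e -> exists N : nat, forall n, (N <= n)%N -> hnorm (u n - x) < e.

Definition hcauchy (u : nat -> V) : Prop :=
  forall e : R, 0 < e -> exists N : nat,
    forall n m, (N <= n)%N -> (N <= m)%N -> hnorm (u n - u m) < e.

Definition hcomplete : Prop :=
  forall u : nat -> V, hcauchy u -> exists x, hconverges u x.

Definition hseparable : Prop :=
  exists d : nat -> V, forall (x : V) (e : R), 0 < e -> exists n, hnorm (x - d n) < e.

Definition hilbert : Prop := is_inner_product /\ hcomplete.

Definition closed_subspace (W : set V) : Prop :=
  [/\ W 0,
      (forall (a : R[i]) (x y : V), W x -> W y -> W (a *: x + y)) &
      (forall (u : nat -> V) (x : V), (forall n, W (u n)) -> hconverges u x -> W x)].

(* T restricted to the subspace W belongs to B(W, W'): a bounded linear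
   operator from W into W' *)
Definition bounded_op (W W' : set V) (T : V -> V) : Prop :=
  [/\ (forall (a : R[i]) (x y : V), W x -> W y -> T (a *: x + y) = a *: T x + T y),
      (forall x, W x -> W' (T x)) &
      (exists M : R, forall x, W x -> hnorm (T x) <= M * hnorm x)].

Definition is_adjoint (K Kst : V -> V) : Prop :=
  forall x y : V, ip (K x) y = ip x (Kst y).

Definition kgframe {T : choiceType} (Kst : V -> V) (Idx : set T)
    (W : T -> set V) (L : T -> V -> V) : Prop :=
  (forall t, Idx t -> bounded_op setT (W t) (L t)) /\
  exists A B : R, [/\ 0 < A, A <= B &
    forall f : V,
      ((A * hnorm (Kst f) ^+ 2)%:E <= \esum_(t in Idx) (hnorm (L t f) ^+ 2)%:E)%E /\
      (\esum_(t in Idx) (hnorm (L t f) ^+ 2)%:E <= (B * hnorm f ^+ 2)%:E)%E].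

Definition gframe {T : choiceType} (Wsp : set V) (Idx : set T)
    (W : T -> set V) (G : T -> V -> V) (c d : R) : Prop :=
  (forall t, Idx t -> bounded_op Wsp (W t) (G t)) /\
  [/\ 0 < c, c <= d &
    forall g : V, Wsp g ->
      ((c * hnorm g ^+ 2)%:E <= \esum_(t in Idx) (hnorm (G t g) ^+ 2)%:E)%E /\
      (\esum_(t in Idx) (hnorm (G t g) ^+ 2)%:E <= (d * hnorm g ^+ 2)%:E)%E].

End Hilbert.

(* Main.v *)
Require Import Defs.
From HB Require Import structures.
From mathcomp Require Import all_boot all_order all_algebra.
From mathcomp Require Import all_classical all_reals.
From mathcomp Require Import ereal esum.
From mathcomp Require Import complex.
Import Order.TTheory GRing.Theory Num.Theory.
Local Open Scope classical_set_scope.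
Local Open Scope ring_scope.

Lemma esumZl_pos (R : realType) (T : choiceType) (S : set T) (a : T -> \bar R) (c : R) :
  0 < c -> (forall i, (0 <= a i)%E) ->
  \esum_(i in S) (c%:E * a i)%E = (c%:E * \esum_(i in S) a i)%E.
Proof.
move=> c0 a0; rewrite /esum -ereal_sup_pZl //; congr ereal_sup.
rewrite image_comp; apply: eq_imagel => X _ /=.
by rewrite ge0_mule_fsumr.
Qed.

Lemma esum_pairs (R : realType) (J : set int) (I : int -> set int)
  (g : int -> int -> \bar R) : (forall i j, (0 <= g i j)%E) ->
  \esum_(p in [set p : int * int | J p.2 /\ I p.2 p.1]) g p.1 p.2 =
  \esum_(j in J) \esum_(i in I j) g i j.
Proof.
move=> g0; rewrite esum_esum; last by move=> *; apply: g0.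
have -> : [set p : int * int | J p.2 /\ I p.2 p.1] =
   (fun k : int * int => (k.2, k.1)) @` (J `*`` I).
  apply/seteqP; split => [[i j] /= [Jj Iji]|].
    by exists (j, i).
  by move=> _ [[j i] /= [Jj Iji] <-] /=.
rewrite esum_image //.
by move=> [a b] [a' b'] _ _ /= [-> ->].
Qed.

Lemma H1 (R : realType) (x d : R) (y : \bar R) : 0 < d -> (0 <= y)%E ->
  (x%:E <= d%:E * y)%E -> ((x / d)%:E <= y)%E.
Proof.
case: y => [r| |] // d0 _ h; last by rewrite leey.
by rewrite -EFinM lee_fin in h; rewrite lee_fin ler_pdivrMr // mulrC.
Qed.

Lemma H2 (R : realType) (x c : R) (y : \bar R) : 0 < c -> (0 <= y)%E ->
  (c%:E * y <= x%:E)%E -> (y <= (x / c)%:E)%E.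
Proof.
case: y => [r| |] // c0 _ h.
  by rewrite -EFinM lee_fin in h; rewrite lee_fin ler_pdivlMr // mulrC.
by rewrite gt0_muley ?lte_fin // in h.
Qed.

Lemma hnorm_ge0 (R : realType) (V : lmodType R[i]) (ip : V -> V -> R[i]) x :
  0 <= hnorm ip x.
Proof. by rewrite /hnorm sqrtr_ge0. Qed.

Lemma comp_bounded (R : realType) (V : lmodType R[i]) (ip : V -> V -> R[i])
  (W1 W2 : set V) (G L : V -> V) :
  bounded_op ip setT W1 L -> bounded_op ip W1 W2 G -> bounded_op ip setT W2 (G \o L).
Proof.
move=> [L1 L2 [M1 HM1]] [G1 G2 [M2 HM2]]; split.
- move=> a x y _ _ /=; rewrite L1 // G1 //; exact: L2.
- by move=> x _; apply: G2; apply: L2.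
- exists (Num.max M2 0 * Num.max M1 0) => x _ /=.
  apply: (le_trans (HM2 _ (L2 x Logic.I))).
  apply: (le_trans (y := Num.max M2 0 * hnorm ip (L x))).
    by apply: ler_wpM2r; [exact: hnorm_ge0| rewrite le_max lexx].
  rewrite -mulrA; apply: ler_wpM2l; first by rewrite le_max lexx orbT.
  apply: (le_trans (HM1 _ Logic.I)).
  by apply: ler_wpM2r; [exact: hnorm_ge0| rewrite le_max lexx].
Qed.

Theorem mainTheorem3 (R : realType) (V : lmodType R[i]) (ip : V -> V -> R[i])
  (HV : hilbert ip) (HVsep : hseparable ip)
  (J : set int) (Hs : int -> set V)
  (HHs : forall j, J j -> closed_subspace ip (Hs j))
  (K Kst : V -> V) (HK : bounded_op ip setT setT K) (HKst : is_adjoint ip K Kst)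
  (Lam : int -> V -> V) (HLam : forall j, J j -> bounded_op ip setT (Hs j) (Lam j))
  (I : int -> set int) (Hs2 : int -> int -> set V)
  (HHs2 : forall j, J j -> forall i, I j i ->
            closed_subspace ip (Hs2 i j) /\ Hs2 i j `<=` Hs j)
  (Gam : int -> int -> V -> V) (Cs Ds : int -> R)
  (HGam : forall j, J j ->
            gframe ip (Hs j) (I j) (fun i => Hs2 i j) (fun i => Gam i j) (Cs j) (Ds j))
  (HC : (0 < ereal_inf [set (Cs j)%:E | j in J])%E)
  (HD : (ereal_sup [set (Ds j)%:E | j in J] < +oo)%E) :
  kgframe ip Kst J Hs Lam <->
  kgframe ip Kst [set p : int * int | J p.2 /\ I p.2 p.1]
    (fun p => Hs2 p.1 p.2) (fun p => Gam p.1 p.2 \o Lam p.2).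
Proof.
have [c [c0 c1 Hc]] : exists c : R, [/\ 0 < c, c <= 1 & forall j, J j -> c <= Cs j].
  move: HC; set S := [set _ | _ in _].
  have lb : forall j, J j -> (ereal_inf S <= (Cs j)%:E)%E.
    by move=> j Jj; apply: ereal_inf_lbound; exists j.
  case: (ereal_inf S) lb => [r| |] lb HC0.
  - exists (Num.min r 1); split.
    + by rewrite lt_min ltr01 andbT -lte_fin.
    + by rewrite ge_min lexx orbT.
    + by move=> j Jj; have := lb j Jj; rewrite lee_fin => h; rewrite ge_min h.
  - by exists 1; split => // j Jj; have := lb j Jj; rewrite leye_eq.
  - by [].
have [d [d1 Hd]] : exists d : R, 1 <= d /\ forall j, J j -> Ds j <= d.
  move: HD; set S := [set _ | _ in _].
  have ub : forall j, J j -> ((Ds j)%:E <= ereal_sup S)%E.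
    by move=> j Jj; apply: ereal_sup_ubound; exists j.
  case: (ereal_sup S) ub => [r| |] ub HD0.
  - exists (Num.max r 1); split; first by rewrite le_max lexx orbT.
    by move=> j Jj; have := ub j Jj; rewrite lee_fin => h; rewrite le_max h.
  - by [].
  - by exists 1; split => // j Jj; have := ub j Jj; rewrite leeNy_eq.
have d0 : 0 < d by apply: lt_le_trans d1.
have Hb : forall f j, J j ->
  ((c * hnorm ip (Lam j f) ^+ 2)%:E <=
     \esum_(i in I j) (hnorm ip (Gam i j (Lam j f)) ^+ 2)%:E)%E /\
  (\esum_(i in I j) (hnorm ip (Gam i j (Lam j f)) ^+ 2)%:E <=
     (d * hnorm ip (Lam j f) ^+ 2)%:E)%E.
  move=> f j Jj; have [_ [_ _ G]] := HGam j Jj; have [_ HL _] := HLam j Jj.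
  have [G1 G2] := G _ (HL f Logic.I); split.
    apply: le_trans G1; rewrite lee_fin; apply: ler_wpM2r; last exact: Hc.
    by rewrite exprn_ge0 // hnorm_ge0.
  apply: le_trans G2 _; rewrite lee_fin; apply: ler_wpM2r.
    by rewrite exprn_ge0 // hnorm_ge0.
  apply: Hd Jj.
set SL := fun f => \esum_(j in J) (hnorm ip (Lam j f) ^+ 2)%:E.
set SP := fun f => \esum_(p in [set p : int * int | J p.2 /\ I p.2 p.1])
     (hnorm ip ((Gam p.1 p.2 \o Lam p.2) f) ^+ 2)%:E.
have eqSP : forall f, SP f = \esum_(j in J) \esum_(i in I j)
     (hnorm ip (Gam i j (Lam j f)) ^+ 2)%:E.
  move=> f; rewrite /SP /=.
  rewrite (esum_pairs _ J I (fun i j => (hnorm ip (Gam i j (Lam j f)) ^+ 2)%:E)) //.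
  by move=> i j; rewrite lee_fin exprn_ge0 // hnorm_ge0.
have SL0 : forall f, (0 <= SL f)%E.
  by move=> f; apply: esum_ge0 => j _; rewrite lee_fin exprn_ge0 // hnorm_ge0.
have low : forall f, (c%:E * SL f <= SP f)%E.
  move=> f; rewrite eqSP /SL -esumZl_pos //; last first.
    by move=> j; rewrite lee_fin exprn_ge0 // hnorm_ge0.
  by apply: le_esum => j Jj; rewrite -EFinM; exact: (Hb f j Jj).1.
have up : forall f, (SP f <= d%:E * SL f)%E.
  move=> f; rewrite eqSP /SL -esumZl_pos //; last first.
    by move=> j; rewrite lee_fin exprn_ge0 // hnorm_ge0.
  by apply: le_esum => j Jj; rewrite -EFinM; exact: (Hb f j Jj).2.
split.
- move=> [HLb [A [B [A0 AB HAB]]]]; split.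
    move=> [i j] /= [Jj Iji]; apply: comp_bounded; first exact: HLam.
    by have [G _] := HGam j Jj; exact: G.
  exists (c * A), (d * B); split.
  + exact: mulr_gt0.
  + apply: ler_pM => //; [exact: ltW | exact: ltW | exact: le_trans c1 d1].
  + move=> f; have [h1 h2] := HAB f; split.
      apply: le_trans (low f); rewrite -mulrA EFinM.
      by apply: lee_wpmul2l h1; rewrite lee_fin ltW.
    apply: le_trans (up f) _; rewrite -mulrA EFinM.
    by apply: lee_wpmul2l h2; rewrite lee_fin ltW.
- move=> [_ [A [B [A0 AB HAB]]]]; split; first exact: HLam.
  exists (A / d), (B / c); split.
  + exact: divr_gt0.
  + apply: (le_trans (y := A / c)).
      apply: ler_pM => //; first exact: ltW.
        by rewrite invr_ge0 ltW.
      by rewrite lef_pV2 // ?posrE //; exact: le_trans c1 d1.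
    by apply: ler_pM => //; [exact: ltW | rewrite invr_ge0 ltW].
  + move=> f; have [h1 h2] := HAB f; split.
      rewrite mulrAC; apply: H1 => //; first exact: SL0. apply: le_trans (up f); exact h1.
    rewrite mulrAC; apply: H2 => //; first exact: SL0. apply: le_trans (low f) _; exact h2.
Qed.
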